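(* Let $r\ge1$ and $s\ge1$ be integers, let $u<v$, and let $g$ be a function whose derivative $g^{(r+s-1)}$ exists and is continuous on an open interval containing $[u,v]$. For nonnegative integers $i,j$ and $x\ne y$ define \[ {}_iM_j(x,y)=\frac{\partial^{i+j}}{\partial x^i\,\partial y^j}\left(\frac{g(y)-g(x)}{y-x}\right). \] Then \[ E\left[g^{(r+s-1)}(B_{r,s}(u,v))\right]=\frac{1}{B(r,s)}\ {}_{r-1}M_{s-1}(u,v), \] i.e. \[ \int_u^v g^{(r+s-1)}(t)\,(t-u)^{s-1}(v-t)^{r-1}\,dt=(v-u)^{r+s-1}\ {}_{r-1}M_{s-1}(u,v). \]
   Context: For $r>0$, $s>0$ and $u<v$, $B_{r,s}(u,v)$ denotes a generalized Beta random variable with density \[ f_B(y)=\frac{1}{B(r,s)}\frac{(y-u)^{s-1}(v-y)^{r-1}}{(v-u)^{r+s-1}},\qquad u\le y\le v, \] where $B(\cdot,\cdot)$ is the Beta function. *)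

(* Defs.v *)
From Stdlib Require Import Reals.
Open Scope R_scope.

Definition ddiff (g : R -> R) (x y : R) : R := (g y - g x) / (y - x).

(* Off-diagonal part of the open square (a,b)^2, where ddiff g is defined. *)
Definition offdiag (a b x y : R) : Prop := a < x < b /\ a < y < b /\ x <> y.

(* [D] is a family of mixed partial derivatives of [F] on the off-diagonal
   part of (a,b)^2 realising  d^(i+j) F / dx^i dy^j  :
   D 0 0 = F; D 0 (k+1) = d/dy (D 0 k) for k < j;
   D (k+1) j = d/dx (D k j) for k < i.  The value of the partial derivative
   at (x,y) is then D i j x y. *)
Definition mixed_partials (F : R -> R -> R) (a b : R) (i j : nat)
    (D : nat -> nat -> R -> R -> R) : Prop :=
  (forall x y, offdiag a b x y -> D 0%nat 0%nat x y = F x y) /\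
  (forall k x y, (k < j)%nat -> offdiag a b x y ->
     derivable_pt_lim (fun y' => D 0%nat k x y') y (D 0%nat (S k) x y)) /\
  (forall k x y, (k < i)%nat -> offdiag a b x y ->
     derivable_pt_lim (fun x' => D k j x' y) x (D (S k) j x y)).

Definition has_integral (f : R -> R) (a b I : R) : Prop :=
  exists pr : Riemann_integrable f a b, RiemannInt pr = I.

Definition is_Beta (r s : nat) (Bv : R) : Prop :=
  has_integral (fun t => t ^ (r - 1) * (1 - t) ^ (s - 1)) 0 1 Bv.

(* Density of the generalized Beta variable B_{r,s}(u,v), given B(r,s) = Bv. *)
Definition beta_density (r s : nat) (u v Bv : R) (y : R) : R :=
  / Bv * ((y - u) ^ (s - 1) * (v - y) ^ (r - 1)) / (v - u) ^ (r + s - 1).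

(* Main.v *)
Require Import Defs.
From Stdlib Require Import Reals Lra Lia Psatz.
From Coquelicot Require Import Coquelicot.
Open Scope R_scope.

Lemma Gcont (a b : R) (G : nat -> R -> R) (N k : nat) x :
  (forall k x, (k < N)%nat -> a < x < b -> derivable_pt_lim (G k) x (G (S k) x)) ->
  (forall x, a < x < b -> continuity_pt (G N) x) ->
  (k <= N)%nat -> a < x < b -> continuity_pt (G k) x.
Proof.
  intros HD HC Hk Hx.
  destruct (Nat.eq_dec k N) as [->|Hne]; [now apply HC|].
  apply derivable_continuous_pt. exists (G (S k) x). apply HD; auto. lia.
Qed.

Lemma cont_c (f : R -> R) x : continuity_pt f x -> continuous f x.
Proof. intros H. now apply continuity_pt_filterlim. Qed.

Lemma param (a b : R) (G : nat -> R -> R) (N k : nat) (p : R -> R -> R) (al w : R -> R) (c0 : R) :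
  (forall k x, (k < N)%nat -> a < x < b -> derivable_pt_lim (G k) x (G (S k) x)) ->
  (forall x, a < x < b -> continuity_pt (G N) x) ->
  (k < N)%nat ->
  (forall c t, is_derive (fun z => p z t) c (al t)) ->
  (forall c t, continuity_2d_pt p c t) ->
  (forall c t, continuity_pt (p c) t) ->
  (forall t, continuity_pt al t) -> (forall t, continuity_pt w t) ->
  (exists d : posreal, forall c t, Rabs (c - c0) < d -> -d < t < 1 + d -> a < p c t < b) ->
  derivable_pt_lim (fun c => RInt (fun t => G k (p c t) * w t) 0 1) c0
     (RInt (fun t => G (S k) (p c0 t) * al t * w t) 0 1).
Proof.
  intros HD HC Hk Hp Hp2 Hp1 Hal Hw [d Hd].
  assert (LD : forall c t, Rabs (c - c0) < d -> -d < t < 1 + d ->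
     is_derive (fun z => G k (p z t) * w t) c (G (S k) (p c t) * al t * w t)).
  { intros c t Hc Ht.
    assert (H1 := is_derive_comp (G k) (fun z => p z t) c (G (S k) (p c t)) (al t)).
    assert (H2 : is_derive (G k) (p c t) (G (S k) (p c t))).
    { apply is_derive_Reals. apply HD; auto. }
    specialize (H1 H2 (Hp c t)).
    apply (is_derive_scal_l _ _ _ (w t)) in H1.
    replace (G (S k) (p c t) * al t * w t) with (scal (scal (al t) (G (S k) (p c t))) (w t)).
    - exact H1.
    - unfold scal; simpl; unfold mult; simpl. ring.
    }
  assert (Hdp : 0 < d) by apply cond_pos.
  apply is_derive_Reals.
  assert (E : RInt (fun t => G (S k) (p c0 t) * al t * w t) 0 1 =
              RInt (fun t => Derive (fun u => G k (p u t) * w t) c0) 0 1).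
  { apply RInt_ext. intros t Ht. rewrite Rmin_left in Ht by lra. rewrite Rmax_right in Ht by lra.
    symmetry. apply is_derive_unique. apply LD. rewrite Rminus_diag, Rabs_R0; lra. lra. }
  rewrite E. clear E.
  apply (is_derive_RInt_param (fun c t => G k (p c t) * w t)).
  - exists d. intros c Hc t Ht. rewrite Rmin_left in Ht by lra. rewrite Rmax_right in Ht by lra.
    eexists. apply LD. exact Hc. lra.
  - intros t Ht. rewrite Rmin_left in Ht by lra. rewrite Rmax_right in Ht by lra.
    apply continuity_2d_pt_ext_loc with (f := fun u v => G (S k) (p u v) * al v * w v).
    + exists d. intros u v Hu Hv. symmetry. apply is_derive_unique. apply LD. exact Hu.
      apply Rabs_def2 in Hv. lra.
    + apply continuity_2d_pt_mult. apply continuity_2d_pt_mult.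
      * apply continuity_1d_2d_pt_comp. 2: apply Hp2.
        apply (Gcont a b G N); auto. apply Hd. rewrite Rminus_diag, Rabs_R0; lra. lra.
      * apply (continuity_1d_2d_pt_comp al (fun _ v => v)). apply Hal. apply continuity_2d_pt_id2.
      * apply (continuity_1d_2d_pt_comp w (fun _ v => v)). apply Hw. apply continuity_2d_pt_id2.
  - exists d. intros c Hc. apply (@ex_RInt_continuous R_CompleteNormedModule). intros z Hz.
    rewrite Rmin_left in Hz by lra. rewrite Rmax_right in Hz by lra.
    apply cont_c. apply continuity_pt_mult. 2: apply Hw.
    apply (continuity_pt_comp (p c) (G k)). apply Hp1.
    apply (Gcont a b G N); auto. lia. apply Hd. exact Hc. lra.
Qed.

Lemma nbhd a b x y : a < x < b -> a < y < b ->
  exists d : posreal, forall x' y' t, Rabs (x' - x) < d -> Rabs (y' - y) < d -> -d < t < 1 + d ->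
    a < x' + t * (y' - x') < b.
Proof.
  intros Hx Hy.
  set (m := Rmin (Rmin (x - a) (b - x)) (Rmin (y - a) (b - y)) / 2).
  assert (Hm : 0 < m).
  { unfold m. repeat apply Rmin_case; lra. }
  assert (Hm1 : m <= (x - a)/2 /\ m <= (b - x)/2 /\ m <= (y-a)/2 /\ m <= (b-y)/2).
  { pose proof (Rmin_l (Rmin (x - a) (b - x)) (Rmin (y - a) (b - y))).
    pose proof (Rmin_r (Rmin (x - a) (b - x)) (Rmin (y - a) (b - y))).
    pose proof (Rmin_l (x - a) (b - x)). pose proof (Rmin_r (x - a) (b - x)).
    pose proof (Rmin_l (y - a) (b - y)). pose proof (Rmin_r (y - a) (b - y)).
    unfold m. lra. }
  assert (Hba : 0 < b - a) by lra.
  set (d := Rmin m (m / (b - a))).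
  assert (Hd : 0 < d). { unfold d. apply Rmin_case; [lra| apply Rdiv_lt_0_compat; lra]. }
  exists (mkposreal d Hd). simpl. intros x' y' t H1 H2 Ht.
  assert (Hdm : d <= m) by apply Rmin_l.
  assert (Hdm2 : d * (b - a) <= m).
  { assert (d <= m / (b - a)) by apply Rmin_r.
    apply Rmult_le_compat_r with (r := b - a) in H; [|lra].
    unfold Rdiv in H. rewrite Rmult_assoc, Rinv_l, Rmult_1_r in H; lra. }
  apply Rabs_def2 in H1. apply Rabs_def2 in H2.
  assert (Hx' : a + m < x' < b - m) by lra.
  assert (Hy' : a + m < y' < b - m) by lra.
  destruct (Rle_lt_dec 0 t) as [Ht0|Ht0].
  - destruct (Rle_lt_dec t 1) as [Ht1|Ht1].
    + split; nra.
    + assert (Habs : Rabs ((t - 1) * (x' - y')) <= d * (b - a)).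
      { rewrite Rabs_mult. apply Rmult_le_compat; try apply Rabs_pos.
        rewrite Rabs_right; lra. apply Rabs_le; lra. }
      apply Rabs_le_between in Habs.
      replace (x' + t * (y' - x')) with (y' - (t - 1) * (x' - y')) by ring. lra.
  - assert (Habs : Rabs (t * (y' - x')) <= d * (b - a)).
    { rewrite Rabs_mult. apply Rmult_le_compat; try apply Rabs_pos.
      rewrite Rabs_left; lra. apply Rabs_le; lra. }
    apply Rabs_le_between in Habs. lra.
Qed.

Lemma deriv_uniq_loc (f f' : R -> R) y l l' (d : posreal) :
  (forall z, Rabs (z - y) < d -> f z = f' z) ->
  derivable_pt_lim f y l -> derivable_pt_lim f' y l' -> l = l'.
Proof.
  intros He H1 H2. apply is_derive_Reals in H1. apply is_derive_Reals in H2.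
  apply is_derive_unique in H2. rewrite <- H2. symmetry. apply is_derive_unique.
  eapply is_derive_ext_loc; [|exact H1]. exists d. intros z Hz. apply He. exact Hz.
Qed.

Lemma offdiag_nbhd_y a b x y : offdiag a b x y ->
  exists d : posreal, forall z, Rabs (z - y) < d -> offdiag a b x z.
Proof.
  intros [Hx [Hy Hxy]].
  assert (Hp : 0 < Rmin (Rmin (y - a) (b - y)) (Rabs (y - x))).
  { apply Rmin_glb_lt; [apply Rmin_glb_lt; lra|]. apply Rabs_pos_lt. intro; apply Hxy; lra. }
  exists (mkposreal _ Hp). simpl. intros z Hz.
  pose proof (Rmin_l (Rmin (y - a) (b - y)) (Rabs (y - x))).
  pose proof (Rmin_r (Rmin (y - a) (b - y)) (Rabs (y - x))).
  pose proof (Rmin_l (y - a) (b - y)). pose proof (Rmin_r (y - a) (b - y)).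
  assert (Hz2 := Hz). apply Rabs_def2 in Hz. split; [lra|split; [lra|]].
  intros Heq. subst z. rewrite <- Rabs_Ropp in Hz2. replace (-(x-y)) with (y - x) in Hz2 by ring.
  lra.
Qed.

Lemma offdiag_nbhd_x a b x y : offdiag a b x y ->
  exists d : posreal, forall z, Rabs (z - x) < d -> offdiag a b z y.
Proof.
  intros [Hx [Hy Hxy]].
  assert (H : offdiag a b y x) by (repeat split; auto; lra).
  destruct (offdiag_nbhd_y a b y x H) as [d Hd].
  exists d. intros z Hz. destruct (Hd z Hz) as [? [? ?]]. repeat split; auto; lra.
Qed.

Lemma uniq F a b i j D D' : mixed_partials F a b i j D -> mixed_partials F a b i j D' ->
  forall x y, offdiag a b x y -> D i j x y = D' i j x y.
Proof.
  intros [A0 [A1 A2]] [B0 [B1 B2]].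
  assert (C1 : forall k, (k <= j)%nat -> forall x y, offdiag a b x y -> D 0%nat k x y = D' 0%nat k x y).
  { induction k as [|k IH]; intros Hk x y Hxy.
    - rewrite A0, B0; auto.
    - destruct (offdiag_nbhd_y a b x y Hxy) as [d Hd].
      eapply (deriv_uniq_loc (fun y' => D 0%nat k x y') (fun y' => D' 0%nat k x y') y _ _ d).
      + intros z Hz. apply IH. lia. auto.
      + apply A1. lia. auto.
      + apply B1. lia. auto. }
  induction i as [|k IH]; intros x y Hxy.
  - apply C1; auto.
  - destruct (offdiag_nbhd_x a b x y Hxy) as [d Hd].
    eapply (deriv_uniq_loc (fun x' => D k j x' y) (fun x' => D' k j x' y) x _ _ d).
    + intros z Hz. apply IH; auto. 
    + apply A2. lia. auto.
    + apply B2. lia. auto.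
Qed.

Lemma D00 (a b x y : R) (G : nat -> R -> R) :
  a < x < b -> a < y < b -> x <> y ->
  (forall z, a < z < b -> derivable_pt_lim (G 0%nat) z (G 1%nat z)) ->
  (forall z, a < z < b -> continuity_pt (G 1%nat) z) ->
  RInt (fun t => G 1%nat (x + t * (y - x)) * ((1 - t) ^ 0 * t ^ 0)) 0 1 = (G 0%nat y - G 0%nat x) / (y - x).
Proof.
  intros Hx Hy Hxy HD HC.
  assert (Hin : forall z, Rmin x y <= z <= Rmax x y -> a < z < b).
  { intros z [H1 H2]. split.
    - apply Rlt_le_trans with (2 := H1). apply Rmin_glb_lt; lra.
    - apply Rle_lt_trans with (1 := H2). apply Rmax_lub_lt; lra. }
  assert (HI : is_RInt (G 1%nat) x y (G 0%nat y - G 0%nat x)).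
  { apply (is_RInt_derive (G 0%nat) (G 1%nat)).
    - intros z Hz. apply is_derive_Reals. apply HD. auto.
    - intros z Hz. apply cont_c. apply HC. auto. }
  assert (Hc := RInt_comp_lin (G 1%nat) (y - x) x 0 1).
  replace ((y - x) * 0 + x) with x in Hc by ring.
  replace ((y - x) * 1 + x) with y in Hc by ring.
  specialize (Hc (ex_intro _ _ HI)).
  rewrite (is_RInt_unique _ _ _ _ HI) in Hc.
  assert (Hyx : y - x <> 0) by (intro; apply Hxy; lra).
  apply Rmult_eq_reg_l with (y - x); auto.
  replace ((y - x) * ((G 0%nat y - G 0%nat x) / (y - x))) with (G 0%nat y - G 0%nat x) by (field; auto).
  assert (Hex : ex_RInt (fun t => G 1%nat (x + t * (y - x)) * ((1 - t) ^ 0 * t ^ 0)) 0 1).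
  { apply (@ex_RInt_continuous R_CompleteNormedModule). intros z Hz.
    rewrite Rmin_left in Hz by lra. rewrite Rmax_right in Hz by lra.
    apply cont_c. apply continuity_pt_mult.
    - apply (continuity_pt_comp (fun t => x + t * (y - x)) (G 1%nat)). reg.
      apply HC. apply Hin. split.
      + destruct (Rle_dec x y). rewrite Rmin_left by lra. nra. rewrite Rmin_right by lra. nra.
      + destruct (Rle_dec x y). rewrite Rmax_right by lra. nra. rewrite Rmax_left by lra. nra.
    - reg. }
  assert (Hs : RInt (fun t => (y - x) * (G 1%nat (x + t * (y - x)) * ((1 - t) ^ 0 * t ^ 0))) 0 1
     = (y - x) * RInt (fun t => G 1%nat (x + t * (y - x)) * ((1 - t) ^ 0 * t ^ 0)) 0 1)
     by exact (RInt_scal _ _ _ (y - x) Hex).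
  rewrite <- Hs, <- Hc.
  apply RInt_ext. intros t _. unfold scal; simpl; unfold mult; simpl.
  replace ((y - x) * t + x) with (x + t * (y - x)) by ring. ring.
Qed.

Lemma ident (u v : R) (h : R -> R) (i j : nat) :
  u < v -> (forall z, u <= z <= v -> continuity_pt h z) ->
  ex_RInt (fun z => h z * (z - u) ^ j * (v - z) ^ i) u v /\
  RInt (fun z => h z * (z - u) ^ j * (v - z) ^ i) u v =
  (v - u) ^ (S (i + j)) * RInt (fun t => h (u + t * (v - u)) * ((1 - t) ^ i * t ^ j)) 0 1.
Proof.
  intros Huv HC.
  assert (Hex : ex_RInt (fun z => h z * (z - u) ^ j * (v - z) ^ i) u v).
  { apply (@ex_RInt_continuous R_CompleteNormedModule). intros z Hz.
    rewrite Rmin_left in Hz by lra. rewrite Rmax_right in Hz by lra.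
    apply cont_c. apply continuity_pt_mult. apply continuity_pt_mult. auto. reg. reg. }
  split; auto.
  assert (Hc := RInt_comp_lin (fun z => h z * (z - u) ^ j * (v - z) ^ i) (v - u) u 0 1).
  replace ((v - u) * 0 + u) with u in Hc by ring.
  replace ((v - u) * 1 + u) with v in Hc by ring.
  rewrite <- (Hc Hex).
  assert (Hex2 : ex_RInt (fun t => h (u + t * (v - u)) * ((1 - t) ^ i * t ^ j)) 0 1).
  { apply (@ex_RInt_continuous R_CompleteNormedModule). intros z Hz.
    rewrite Rmin_left in Hz by lra. rewrite Rmax_right in Hz by lra.
    apply cont_c. apply continuity_pt_mult.
    - apply (continuity_pt_comp (fun t => u + t * (v - u)) h). reg. apply HC. nra.
    - reg. }
  assert (Hs : RInt (fun t => (v - u) ^ (S (i + j)) * (h (u + t * (v - u)) * ((1 - t) ^ i * t ^ j))) 0 1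
     = (v - u) ^ (S (i + j)) * RInt (fun t => h (u + t * (v - u)) * ((1 - t) ^ i * t ^ j)) 0 1)
     by exact (RInt_scal _ _ _ _ Hex2).
  rewrite <- Hs.
  apply RInt_ext. intros t _. unfold scal; simpl; unfold mult; simpl.
  replace ((v - u) * t + u) with (u + t * (v - u)) by ring.
  replace (u + t * (v - u) - u) with (t * (v - u)) by ring.
  replace (v - (u + t * (v - u))) with ((1 - t) * (v - u)) by ring.
  rewrite !Rpow_mult_distr, pow_add. ring.
Qed.

Lemma hasI (f : R -> R) a b I : ex_RInt f a b -> RInt f a b = I -> has_integral f a b I.
Proof.
  intros H E. exists (ex_RInt_Reals_0 _ _ _ H). rewrite <- RInt_Reals. exact E.
Qed.

Theorem mainTheorem5 (r s : nat) (u v a b : R) (g : R -> R) (G : nat -> R -> R) :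
  (1 <= r)%nat -> (1 <= s)%nat -> u < v -> a < u -> v < b ->
  (forall x, a < x < b -> G 0%nat x = g x) ->
  (forall k x, (k < r + s - 1)%nat -> a < x < b ->
     derivable_pt_lim (G k) x (G (S k) x)) ->
  (forall x, a < x < b -> continuity_pt (G (r + s - 1)%nat) x) ->
  (exists D, mixed_partials (ddiff g) a b (r - 1) (s - 1) D) /\
  (forall D, mixed_partials (ddiff g) a b (r - 1) (s - 1) D ->
     (exists Bv, is_Beta r s Bv /\
        has_integral (fun t => G (r + s - 1)%nat t * beta_density r s u v Bv t)
          u v (/ Bv * D (r - 1)%nat (s - 1)%nat u v)) /\
     has_integral
       (fun t => G (r + s - 1)%nat t * (t - u) ^ (s - 1) * (v - t) ^ (r - 1))
       u v ((v - u) ^ (r + s - 1) * D (r - 1)%nat (s - 1)%nat u v)).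
Proof.
  intros Hr Hs Huv Hau Hvb HG0 HD HC.
  set (Dfam := fun (i j : nat) (x y : R) =>
    RInt (fun t => G (S (i + j)) (x + t * (y - x)) * ((1 - t) ^ i * t ^ j)) 0 1).
  assert (MP : mixed_partials (ddiff g) a b (r - 1) (s - 1) Dfam).
  { split; [|split].
    - intros x y [Hx [Hy Hxy]]. unfold Dfam, ddiff. simpl (S (0 + 0)).
      rewrite (D00 a b x y G); auto.
      + rewrite !HG0; auto.
      + intros z Hz. apply HD; auto. lia.
      + intros z Hz. apply (Gcont a b G (r + s - 1)); auto. lia.
    - intros k x y Hk [Hx [Hy Hxy]]. unfold Dfam.
      assert (E : RInt (fun t => G (S (0 + S k)) (x + t * (y - x)) * ((1 - t) ^ 0 * t ^ S k)) 0 1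
         = RInt (fun t => G (S (S (0 + k))) (x + t * (y - x)) * t * ((1 - t) ^ 0 * t ^ k)) 0 1).
      { apply RInt_ext. intros t _. simpl. ring. }
      rewrite E.
      apply (param a b G (r + s - 1) (S (0 + k)) (fun c t => x + t * (c - x)) (fun t => t)
        (fun t => (1 - t) ^ 0 * t ^ k)); auto.
      + lia.
      + intros c t. auto_derive; auto. ring.
      + intros c t. apply continuity_2d_pt_plus. apply continuity_2d_pt_const.
        apply continuity_2d_pt_mult. apply continuity_2d_pt_id2.
        apply continuity_2d_pt_minus. apply continuity_2d_pt_id1. apply continuity_2d_pt_const.
      + intros c t. reg.
      + intros t. reg.
      + intros t. reg.
      + destruct (nbhd a b x y Hx Hy) as [d Hd]. exists d. intros c t Hc Ht.
        apply Hd; auto. rewrite Rminus_diag, Rabs_R0. apply cond_pos.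
    - intros k x y Hk [Hx [Hy Hxy]]. unfold Dfam.
      assert (E : RInt (fun t => G (S (S k + (s - 1))) (x + t * (y - x)) * ((1 - t) ^ S k * t ^ (s - 1))) 0 1
         = RInt (fun t => G (S (S (k + (s - 1)))) (x + t * (y - x)) * (1 - t) * ((1 - t) ^ k * t ^ (s - 1))) 0 1).
      { apply RInt_ext. intros t _. simpl. ring. }
      rewrite E.
      apply (param a b G (r + s - 1) (S (k + (s - 1))) (fun c t => c + t * (y - c)) (fun t => 1 - t)
        (fun t => (1 - t) ^ k * t ^ (s - 1))); auto.
      + lia.
      + intros c t. auto_derive; auto. ring.
      + intros c t. apply continuity_2d_pt_plus. apply continuity_2d_pt_id1.
        apply continuity_2d_pt_mult. apply continuity_2d_pt_id2.
        apply continuity_2d_pt_minus. apply continuity_2d_pt_const. apply continuity_2d_pt_id1.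
      + intros c t. reg.
      + intros t. reg.
      + intros t. reg.
      + destruct (nbhd a b x y Hx Hy) as [d Hd]. exists d. intros c t Hc Ht.
        apply Hd; auto. rewrite Rminus_diag, Rabs_R0. apply cond_pos. }
  split; [exists Dfam; exact MP|].
  intros D HDm.
  assert (Heq : D (r - 1)%nat (s - 1)%nat u v = Dfam (r - 1)%nat (s - 1)%nat u v).
  { apply (uniq (ddiff g) a b (r - 1) (s - 1) D Dfam HDm MP). repeat split; lra. }
  rewrite Heq. clear Heq.
  assert (HN : S (r - 1 + (s - 1)) = (r + s - 1)%nat) by lia.
  destruct (ident u v (G (r + s - 1)%nat) (r - 1) (s - 1) Huv) as [Hex Hid].
  { intros z Hz. apply HC. lra. }
  unfold Dfam. rewrite HN in Hid |- *.
  set (J := RInt (fun t => G (r + s - 1)%nat (u + t * (v - u)) * ((1 - t) ^ (r - 1) * t ^ (s - 1))) 0 1) in *.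
  set (f := fun z => G (r + s - 1)%nat z * (z - u) ^ (s - 1) * (v - z) ^ (r - 1)) in *.
  assert (HP : (v - u) ^ (r + s - 1) <> 0) by (apply pow_nonzero; lra).
  split.
  - set (Bv := RInt (fun t => t ^ (r - 1) * (1 - t) ^ (s - 1)) 0 1).
    exists Bv. split.
    + unfold is_Beta. apply hasI; [|reflexivity].
      apply (@ex_RInt_continuous R_CompleteNormedModule). intros z Hz. apply cont_c. reg.
    + set (c := / Bv / (v - u) ^ (r + s - 1)).
      assert (Hex2 : ex_RInt (fun t => c * f t) u v) by exact (ex_RInt_scal _ _ _ c Hex).
      assert (Hs2 : RInt (fun t => c * f t) u v = c * RInt f u v) by exact (RInt_scal _ _ _ c Hex).
      assert (Hfe : forall t, c * f t = G (r + s - 1)%nat t * beta_density r s u v Bv t).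
      { intros t. unfold c, f, beta_density. unfold Rdiv. ring. }
      apply hasI.
      * eapply ex_RInt_ext; [|exact Hex2]. intros t _. apply Hfe.
      * rewrite <- (RInt_ext (fun t => c * f t)); [|intros t _; apply Hfe].
        rewrite Hs2, Hid. unfold c. unfold Rdiv. rewrite Rmult_assoc. f_equal.
        field. exact HP.
  - apply hasI; auto.
Qed.
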